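(* Let $\mathcal X$ and $\mathcal U$ be finite nonempty sets, $f:\mathcal X\times\mathcal U\to\mathcal X$, and $\ell_1,\ell_2:\mathcal X\to\mathbb R$. Define, for $x\in\mathcal X$, $V_{\mathrm{R}i}^*(x)=\max_{\pi\in\Pi}\max_{\tau\in\mathbb N}\ell_i(\xi_x^\pi(\tau))$ for $i=1,2$, $$\hat\ell(x)=\max\big\{\min\{\ell_1(x),V_{\mathrm{R}2}^*(x)\},\ \min\{V_{\mathrm{R}1}^*(x),\ell_2(x)\}\big\},\qquad \tilde V_{\mathrm R}^*(x)=\max_{\pi\in\Pi}\max_{\tau\in\mathbb N}\hat\ell(\xi_x^\pi(\tau)).$$ Then for every $x\in\mathcal X$, $$\max_{\bar\pi\in\overline\Pi}\min\Big\{\max_{\tau\in\mathbb N}\ell_1(\bar\xi_x^{\bar\pi}(\tau)),\max_{\tau\in\mathbb N}\ell_2(\bar\xi_x^{\bar\pi}(\tau))\Big\}=\max_{\mathbf u\in\mathbb U}\min\Big\{\max_{\tau\in\mathbb N}\ell_1(\xi_x^{\mathbf u}(\tau)),\max_{\tau\in\mathbb N}\ell_2(\xi_x^{\mathbf u}(\tau))\Big\}=\tilde V_{\mathrm R}^*(x).$$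
   Context: $\mathbb N=\{0,1,2,\dots\}$. $\Pi$ is the set of maps $\pi:\mathcal X\to\mathcal U$ and $\mathbb U$ the set of action sequences $\mathbf u:\mathbb N\to\mathcal U$. For $x\in\mathcal X$ and $\pi\in\Pi$, $\xi_x^\pi(0)=x$, $\xi_x^\pi(t+1)=f(\xi_x^\pi(t),\pi(\xi_x^\pi(t)))$; for $\mathbf u\in\mathbb U$, $\xi_x^{\mathbf u}(0)=x$, $\xi_x^{\mathbf u}(t+1)=f(\xi_x^{\mathbf u}(t),\mathbf u(t))$. Let $\mathcal Y=\{\ell_1(x):x\in\mathcal X\}$, $\mathcal Z=\{\ell_2(x):x\in\mathcal X\}$, and $\overline\Pi$ the set of augmented policies $\bar\pi:\mathcal X\times\mathcal Y\times\mathcal Z\to\mathcal U$. The augmented trajectory is defined by $\bar\xi_x^{\bar\pi}(0)=x$, $\bar y_x^{\bar\pi}(0)=\ell_1(x)$, $\bar z_x^{\bar\pi}(0)=\ell_2(x)$, $\bar\xi_x^{\bar\pi}(t+1)=f\big(\bar\xi_x^{\bar\pi}(t),\bar\pi(\bar\xi_x^{\bar\pi}(t),\bar y_x^{\bar\pi}(t),\bar z_x^{\bar\pi}(t))\big)$, $\bar y_x^{\bar\pi}(t+1)=\max\{\ell_1(\bar\xi_x^{\bar\pi}(t+1)),\bar y_x^{\bar\pi}(t)\}$, $\bar z_x^{\bar\pi}(t+1)=\max\{\ell_2(\bar\xi_x^{\bar\pi}(t+1)),\bar z_x^{\bar\pi}(t)\}$. *)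

(* Defs.v *)
From HB Require Import structures.
From mathcomp Require Import all_boot all_order all_algebra.
From mathcomp Require Import boolp classical_sets reals.
Set Implicit Arguments. Unset Strict Implicit. Unset Printing Implicit Defensive.
Import Order.TTheory GRing.Theory Num.Theory.
Local Open Scope ring_scope.
Local Open Scope classical_set_scope.

Section Defs.
Variables (R : realType) (X U : finType) (f : X -> U -> X).

Fixpoint traj_pi (pi : X -> U) (x : X) (t : nat) : X :=
  match t with
  | O => x
  | S t' => let s := traj_pi pi x t' in f s (pi s)
  end.

Fixpoint traj_u (u : nat -> U) (x : X) (t : nat) : X :=
  match t with
  | O => x
  | S t' => let s := traj_u u x t' in f s (u t')
  end.

(* The value set  { l x : x in X }  as a type (the sets calY, calZ). *)
Definition valset (l : X -> R) : Type := {y : R | exists x, l x = y}.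

Definition vinj (l : X -> R) (x : X) : valset l := exist _ (l x) (ex_intro _ x erefl).

Lemma vmax_in (l : X -> R) (x : X) (y : valset l) :
  exists x', l x' = Num.max (l x) (proj1_sig y).
Proof.
case: y => y [x0 Hx0] /=; rewrite -Hx0; case: (leP (l x) (l x0)) => _; by eexists.
Qed.

Definition vmax (l : X -> R) (x : X) (y : valset l) : valset l :=
  exist _ (Num.max (l x) (proj1_sig y)) (vmax_in x y).

Fixpoint aug_traj (l1 l2 : X -> R) (pib : X -> valset l1 -> valset l2 -> U)
    (x : X) (t : nat) : X * valset l1 * valset l2 :=
  match t with
  | O => (x, vinj l1 x, vinj l2 x)
  | S t' =>
      let: (s, y, z) := aug_traj pib x t' in
      let s' := f s (pib s y z) in
      (s', vmax s' y, vmax s' z)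
  end.

Definition aug_state (l1 l2 : X -> R) (pib : X -> valset l1 -> valset l2 -> U)
    (x : X) (t : nat) : X := (aug_traj pib x t).1.1.

Definition VRstar (l : X -> R) (x : X) : R :=
  sup (range (fun pi : X -> U => sup (range (fun t : nat => l (traj_pi pi x t))))).

Definition lhat (l1 l2 : X -> R) (x : X) : R :=
  Num.max (Num.min (l1 x) (VRstar l2 x)) (Num.min (VRstar l1 x) (l2 x)).

Definition VRtilde (l1 l2 : X -> R) (x : X) : R :=
  sup (range (fun pi : X -> U =>
    sup (range (fun t : nat => lhat l1 l2 (traj_pi pi x t))))).

End Defs.

(* Main.v *)
Require Import Defs.
From HB Require Import structures.
From mathcomp Require Import all_boot all_order all_algebra.
From mathcomp Require Import boolp classical_sets reals.
Import Order.TTheory GRing.Theory Num.Theory.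
Local Open Scope ring_scope.
Local Open Scope classical_set_scope.

Section Sups.
Variable R : realType.

Lemma le_sup_range (I : Type) (F : I -> R) (M : R) i :
  (forall j, F j <= M) -> F i <= sup (range F).
Proof.
move=> HM; apply: ub_le_sup; last by exists i.
by exists M => _ [j _ <-].
Qed.

Lemma sup_range_le (I : Type) (F : I -> R) (M : R) (i0 : I) :
  (forall j, F j <= M) -> sup (range F) <= M.
Proof.
move=> HM; apply: ge_sup; first by exists (F i0), i0.
by move=> _ [j _ <-].
Qed.

Lemma exists_max (X : finType) (P : pred X) (l : X -> R) w0 : P w0 ->
  exists w, P w /\ forall w', P w' -> l w' <= l w.
Proof.
move=> Pw0; case: (arg_maxP l Pw0) => w Pw Hw; by exists w; split => // w' Pw'; apply: Hw.
Qed.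

Lemma sup_attained (X : finType) (s : nat -> X) (l : X -> R) :
  exists a, sup (range (fun t => l (s t))) = l (s a) /\ forall t, l (s t) <= l (s a).
Proof.
have [w [Pw Hw]] := @exists_max X (fun w => `[< exists t, s t = w >]) l (s 0%N)
   (asboolT (ex_intro _ 0%N erefl)).
move/asboolP: Pw => [a Ha]; subst w.
have Hb : forall t, l (s t) <= l (s a) by move=> t; apply: Hw; apply/asboolP; exists t.
exists a; split => //; apply/le_anti/andP; split.
  exact: sup_range_le.
exact: le_sup_range.
Qed.

End Sups.
Section Traj.
Variables (S U : finType) (g : S -> U -> S).

Lemma traj_u_shift (u : nat -> U) s a k :
  traj_u g u s (a + k) = traj_u g (fun j => u (a + j)%N) (traj_u g u s a) k.
Proof. by elim: k => [|k IH]; rewrite ?addn0 // addnS /= IH. Qed.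

Lemma traj_pi_shift (pi : S -> U) s t :
  traj_pi g pi s t.+1 = traj_pi g pi (g s (pi s)) t.
Proof.
elim: t => [|t IH] //.
transitivity (let w := traj_pi g pi s t.+1 in g w (pi w)); first by [].
by rewrite IH.
Qed.

Lemma traj_pi_u (pi : S -> U) s t :
  traj_pi g pi s t = traj_u g (fun k => pi (traj_pi g pi s k)) s t.
Proof. by elim: t => [|t IH] //=; rewrite -IH. Qed.

Lemma traj_u_ext (u v : nat -> U) s t :
  (forall k, (k < t)%N -> u k = v k) -> traj_u g u s t = traj_u g v s t.
Proof.
elim: t => [|t IH] H //=; rewrite IH ?H // => k Hk; apply: H; exact: ltnW.
Qed.

Lemma reach (P : pred S) (u : nat -> U) s t : P (traj_u g u s t) ->
  exists pi t', P (traj_pi g pi s t').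
Proof.
pose Qb n w : bool := `[< exists v, P (traj_u g v w n) >].
pose u00 := u 0%N.
pose pi w := match pselect (exists n, Qb n w) with
  | left H => odflt u00 [pick u0 | Qb (ex_minn H).-1 (g w u0)]
  | right _ => u00 end.
have step : forall w n, Qb n w -> ~~ P w -> exists m, (m < n)%N /\ Qb m (g w (pi w)).
  move=> w n Hn nP; rewrite /pi; case: pselect => [H|nH]; last first.
    by exfalso; apply: nH; exists n.
  case: ex_minnP => m Hm Hmin.
  case: m Hm Hmin => [|m] Hm Hmin.
    by move/asboolP: Hm => [v Hv]; rewrite Hv in nP.
  case: pickP => [u0 Hu0|none] /=.
    by exists m; split => //; apply: Hmin.
  exfalso; move/asboolP: Hm => [v Hv].
  have := none (v 0%N); rewrite /= /Qb; move/negP; apply; apply/asboolP.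
  exists (fun j => v (1 + j)%N); by move: Hv; rewrite -add1n traj_u_shift.
suff main : forall n w, Qb n w -> exists t', P (traj_pi g pi w t').
  by exists pi; apply: (main t); apply/asboolP; exists u.
elim/ltn_ind => n IH w Hn.
case Pw: (P w); first by exists 0%N.
have [m [Hm Hq]] := step w n Hn (negbT Pw).
have [t' Ht'] := IH m Hm _ Hq.
by exists t'.+1; rewrite traj_pi_shift.
Qed.

End Traj.

Section Main.
Variables (R : realType) (X U : finType) (f : X -> U -> X) (l1 l2 : X -> R) (x : X) (u0 : U).

Lemma bound12 : exists L, forall w, l1 w <= L /\ l2 w <= L.
Proof.
have [w [_ Hw]] := @exists_max R X predT (fun w => Num.max (l1 w) (l2 w)) x erefl.
exists (Num.max (l1 w) (l2 w)) => w'.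
by have := Hw w' erefl; rewrite ge_max => /andP.
Qed.

Definition Mu (u : nat -> U) := Num.min (sup (range (fun t => l1 (traj_u f u x t))))
             (sup (range (fun t => l2 (traj_u f u x t)))).
Definition Ma (pib : X -> valset l1 -> valset l2 -> U) :=
  Num.min (sup (range (fun t => l1 (aug_state f pib x t))))
             (sup (range (fun t => l2 (aug_state f pib x t)))).

Lemma sup_traj_le (s : nat -> X) L : (forall w, l1 w <= L /\ l2 w <= L) ->
  sup (range (fun t => l1 (s t))) <= L /\ sup (range (fun t => l2 (s t))) <= L.
Proof.
move=> HL; split; apply: (@sup_range_le _ _ _ _ 0%N) => j; exact: (proj1 (HL _)) || exact: (proj2 (HL _)).
Qed.

Lemma Mu_le L : (forall w, l1 w <= L /\ l2 w <= L) -> forall u, Mu u <= L.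
Proof. move=> HL u; rewrite /Mu ge_min; by have [-> _] := sup_traj_le (traj_u f u x) L HL. Qed.

Lemma Ma_le L : (forall w, l1 w <= L /\ l2 w <= L) -> forall pib, Ma pib <= L.
Proof. move=> HL u; rewrite /Ma ge_min; by have [-> _] := sup_traj_le (aug_state f u x) L HL. Qed.

Lemma aug_state_S (pib : X -> valset l1 -> valset l2 -> U) t : aug_state f pib x t.+1 =
  f (aug_state f pib x t) (pib (aug_traj f pib x t).1.1 (aug_traj f pib x t).1.2 (aug_traj f pib x t).2).
Proof. rewrite /aug_state /=; by case: (aug_traj f pib x t) => [[s y] z]. Qed.

Lemma aug_as_u (pib : X -> valset l1 -> valset l2 -> U) : exists u, forall t, aug_state f pib x t = traj_u f u x t.
Proof.
exists (fun t => pib (aug_traj f pib x t).1.1 (aug_traj f pib x t).1.2 (aug_traj f pib x t).2).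
by elim => [|t IH] //; rewrite aug_state_S IH.
Qed.

Lemma A_le_B : sup (range Ma) <= sup (range Mu).
Proof.
have [L HL] := bound12.
apply: ge_sup; first by exists (Ma (fun _ _ _ => u0)), (fun _ _ _ => u0).
move=> _ [pib _ <-]; have [u Hu] := aug_as_u pib.
have -> : Ma pib = Mu u.
  have E : aug_state f pib x = traj_u f u x by apply: funext => t; rewrite Hu.
  by rewrite /Ma /Mu E.
by apply: le_sup_range; apply: Mu_le HL.
Qed.

Lemma yval (pib : X -> valset l1 -> valset l2 -> U) t :
  (exists k, proj1_sig (aug_traj f pib x t).1.2 = l1 (aug_state f pib x k)) /\
  (exists k, proj1_sig (aug_traj f pib x t).2 = l2 (aug_state f pib x k)).
Proof.
rewrite /aug_state; elim: t => [|t [[k1 Hk1] [k2 Hk2]]]; first by split; exists 0%N.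
move: Hk1 Hk2; rewrite [aug_traj _ _ _ t.+1]/=.
case E: (aug_traj f pib x t) => [[s y] z] /= Hk1 Hk2.
split.
  rewrite maxEle; case: ifP => _; first by exists k1.
  by exists t.+1; rewrite /= E.
rewrite maxEle; case: ifP => _; first by exists k2.
by exists t.+1; rewrite /= E.
Qed.

Lemma Mu_le_Ma (u : nat -> U) : exists pib, Mu u <= Ma pib.
Proof.
have [L HL] := bound12.
pose c := Mu u.
have [a [Ha _]] := @sup_attained R X (traj_u f u x) l1.
have [b [Hb _]] := @sup_attained R X (traj_u f u x) l2.
have c1 : c <= l1 (traj_u f u x a) by rewrite /c /Mu Ha ge_min lexx.
have c2 : c <= l2 (traj_u f u x b) by rewrite /c /Mu Hb ge_min lexx orbT.
pose S := (X * bool * bool)%type.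
pose g (p : S) (v : U) : S := let w' := f p.1.1 v in (w', p.1.2 || (c <= l1 w'), p.2 || (c <= l2 w')).
pose s0 : S := (x, c <= l1 x, c <= l2 x).
have C1 : forall t, (traj_u g u s0 t).1.1 = traj_u f u x t /\
    (forall k, (k <= t)%N -> c <= l1 (traj_u f u x k) -> (traj_u g u s0 t).1.2) /\
    (forall k, (k <= t)%N -> c <= l2 (traj_u f u x k) -> (traj_u g u s0 t).2).
  elim => [|t [IH1 [IH2 IH3]]].
    by split => //; split => k; rewrite leqn0 => /eqP -> /=.
  split; first by rewrite /= IH1.
  split => k; rewrite leq_eqVlt => /orP [/eqP ->|Hk] Hc /=.
  - by rewrite IH1 -[f _ _]/(traj_u f u x t.+1) Hc orbT.
  - by rewrite (IH2 k) //.
  - by rewrite IH1 -[f _ _]/(traj_u f u x t.+1) Hc orbT.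
  - by rewrite (IH3 k) //.
have [pih [T HT]] : exists pih T, (fun p : S => p.1.2 && p.2) (traj_pi g pih s0 T).
  apply: (@reach S U g (fun p : S => p.1.2 && p.2) u s0 (maxn a b)).
  have [_ [H1 H2]] := C1 (maxn a b).
  by rewrite /= (H1 a) ?leq_maxl // (H2 b) ?leq_maxr.
pose pib (w : X) (y : valset l1) (z : valset l2) := pih (w, c <= proj1_sig y, c <= proj1_sig z).
have C2 : forall t, traj_pi g pih s0 t =
   (aug_state f pib x t, c <= proj1_sig (aug_traj f pib x t).1.2, c <= proj1_sig (aug_traj f pib x t).2).
  elim => [|t IH] //.
  rewrite [traj_pi _ _ _ t.+1]/= IH /aug_state [aug_traj _ _ _ t.+1]/=.
  case: (aug_traj f pib x t) => [[s y] z] /=.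
  by rewrite /g /= !le_max orbC [_ || (c <= proj1_sig z)]orbC.
exists pib.
move: HT; rewrite C2 /= => /andP [Hy Hz].
have [[k1 Hk1] [k2 Hk2]] := yval pib T.
rewrite /Ma le_min; apply/andP; split.
  apply: (le_trans Hy); rewrite Hk1; apply: le_sup_range => j; exact: (proj1 (HL _)).
apply: (le_trans Hz); rewrite Hk2; apply: le_sup_range => j; exact: (proj2 (HL _)).
Qed.

Lemma B_le_A : sup (range Mu) <= sup (range Ma).
Proof.
have [L HL] := bound12.
apply: ge_sup; first by exists (Mu (fun _ => u0)), (fun _ => u0).
move=> _ [u _ <-]; have [pib Hp] := Mu_le_Ma u.
apply: (le_trans Hp); apply: le_sup_range; apply: Ma_le HL.
Qed.

Lemma reach_state (u : nat -> U) s t : exists pi t', traj_pi f pi s t' = traj_u f u s t.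
Proof.
have [pi [t' /eqP H]] := @reach X U f (pred1 (traj_u f u s t)) u s t (eqxx _).
by exists pi, t'.
Qed.

Lemma VR_ge (l : X -> R) L (HL : forall w, l w <= L) pi w t :
  l (traj_pi f pi w t) <= VRstar f l w.
Proof.
have H1 := (@le_sup_range R nat (fun t => l (traj_pi f pi w t)) L t (fun j => HL _)).
apply: (le_trans H1).
apply: (@le_sup_range R (X -> U) (fun p => sup (range (fun t => l (traj_pi f p w t)))) L pi) => j; exact: (@sup_range_le _ _ _ _ 0%N).
Qed.

Lemma lhat_le_C L (HL : forall w, l1 w <= L /\ l2 w <= L) pi t :
  lhat f l1 l2 (traj_pi f pi x t) <= VRtilde f l1 l2 x.
Proof.
have Hb : forall w, lhat f l1 l2 w <= L.
  move=> w; rewrite /lhat ge_max !ge_min.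
  by case: (HL w) => -> ->; rewrite ?orbT.
apply: (le_trans (@le_sup_range R nat (fun t => lhat f l1 l2 (traj_pi f pi x t)) L t (fun j => Hb _))).
apply: (@le_sup_range R (X -> U) (fun p => sup (range (fun t => lhat f l1 l2 (traj_pi f p x t)))) L pi) => j; exact: (@sup_range_le _ _ _ _ 0%N).
Qed.

Lemma B_le_C : sup (range Mu) <= VRtilde f l1 l2 x.
Proof.
have [L HL] := bound12.
have HL1 : forall w, l1 w <= L by move=> w; case: (HL w).
have HL2 : forall w, l2 w <= L by move=> w; case: (HL w).
apply: ge_sup; first by exists (Mu (fun _ => u0)), (fun _ => u0).
move=> _ [u _ <-].
have [a [Ha _]] := @sup_attained R X (traj_u f u x) l1.
have [b [Hb _]] := @sup_attained R X (traj_u f u x) l2.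
rewrite /Mu Ha Hb.
case: (leqP a b) => Hab.
- have [pi [t Ht]] := reach_state u x a.
  have [pi' [t' Ht']] := reach_state (fun j => u (a + j)%N) (traj_u f u x a) (b - a).
  rewrite -traj_u_shift subnKC // in Ht'.
  apply: (le_trans _ (@lhat_le_C L HL pi t)); rewrite Ht /lhat le_max; apply/orP; left.
  rewrite le_min; apply/andP; split; rewrite ge_min ?lexx //.
  by rewrite -Ht' (@VR_ge l2 L HL2) orbT.
- have [pi [t Ht]] := reach_state u x b.
  have [pi' [t' Ht']] := reach_state (fun j => u (b + j)%N) (traj_u f u x b) (a - b).
  rewrite -traj_u_shift subnKC ?(ltnW Hab) // in Ht'.
  apply: (le_trans _ (@lhat_le_C L HL pi t)); rewrite Ht /lhat le_max; apply/orP; right.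
  rewrite le_min; apply/andP; split; rewrite ge_min ?lexx ?orbT //.
  by rewrite -Ht' (@VR_ge l1 L HL1).
Qed.

Lemma concat pi t pi' t' : exists u,
  traj_u f u x t = traj_pi f pi x t /\
  traj_u f u x (t + t') = traj_pi f pi' (traj_pi f pi x t) t'.
Proof.
pose w := traj_pi f pi x t.
exists (fun k => if (k < t)%N then pi (traj_pi f pi x k) else pi' (traj_pi f pi' w (k - t))).
have E1 : traj_u f (fun k => if (k < t)%N then pi (traj_pi f pi x k) else pi' (traj_pi f pi' w (k - t))) x t = w.
  rewrite /w traj_pi_u; apply: traj_u_ext => k Hk; by rewrite Hk.
split => //.
rewrite traj_u_shift E1 -/w traj_pi_u; apply: traj_u_ext => k _.
by rewrite ltnNge leq_addr /= addKn.
Qed.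

Lemma C_le_B : VRtilde f l1 l2 x <= sup (range Mu).
Proof.
have [L HL] := bound12.
have HB : forall u, Mu u <= sup (range Mu) by move=> u; apply: le_sup_range; apply: Mu_le HL.
have K : forall pi t pi' t', let w := traj_pi f pi x t in let w' := traj_pi f pi' w t' in
   Num.min (l1 w) (l2 w') <= sup (range Mu) /\ Num.min (l1 w') (l2 w) <= sup (range Mu).
  move=> pi t pi' t' w w'.
  have [u [E1 E2]] := concat pi t pi' t'.
  have [B1 B2] := sup_traj_le (traj_u f u x) L HL.
  have S1 : forall k, l1 (traj_u f u x k) <= sup (range (fun t => l1 (traj_u f u x t)))
    by move=> k; exact: (@le_sup_range R nat (fun t => l1 (traj_u f u x t)) L k (fun j => proj1 (HL _))).
  have S2 : forall k, l2 (traj_u f u x k) <= sup (range (fun t => l2 (traj_u f u x t)))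
    by move=> k; exact: (@le_sup_range R nat (fun t => l2 (traj_u f u x t)) L k (fun j => proj2 (HL _))).
  split; apply: (le_trans _ (HB u)); rewrite /Mu le_min; apply/andP; split.
  - by rewrite ge_min /w -E1 S1.
  - by rewrite ge_min /w' /w -E2 S2 orbT.
  - by rewrite ge_min /w' /w -E2 S1.
  - by rewrite ge_min /w -E1 S2 orbT.
apply: ge_sup; first by exists (sup (range (fun t => lhat f l1 l2 (traj_pi f (fun _ => u0) x t)))), (fun _ => u0).
move=> _ [pi _ <-].
apply: ge_sup; first by exists (lhat f l1 l2 (traj_pi f pi x 0)), 0%N.
move=> _ [t _ <-].
set w := traj_pi f pi x t.
rewrite /lhat ge_max; apply/andP; split.
- case: (leP (l1 w) (sup (range Mu))) => h; first by rewrite ge_min h.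
  rewrite ge_min; apply/orP; right.
  apply: ge_sup; first by exists (sup (range (fun t => l2 (traj_pi f (fun _ => u0) w t)))), (fun _ => u0).
  move=> _ [pi' _ <-].
  apply: ge_sup; first by exists (l2 (traj_pi f pi' w 0)), 0%N.
  move=> _ [t' _ <-].
  have [K1 _] := K pi t pi' t'.
  by move: K1; rewrite -/w ge_min leNgt h.
- case: (leP (l2 w) (sup (range Mu))) => h; first by rewrite ge_min h orbT.
  rewrite ge_min; apply/orP; left.
  apply: ge_sup; first by exists (sup (range (fun t => l1 (traj_pi f (fun _ => u0) w t)))), (fun _ => u0).
  move=> _ [pi' _ <-].
  apply: ge_sup; first by exists (l1 (traj_pi f pi' w 0)), 0%N.
  move=> _ [t' _ <-].
  have [_ K2] := K pi t pi' t'.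
  by move: K2; rewrite -/w ge_min [(l2 w <= _)]leNgt h orbF.
Qed.

End Main.

Theorem theorem2 (R : realType) (X U : finType) (HX : (0 < #|X|)%N) (HU : (0 < #|U|)%N)
  (f : X -> U -> X) (l1 l2 : X -> R) (x : X) :
  sup (range (fun pib : X -> valset l1 -> valset l2 -> U =>
     Num.min (sup (range (fun t : nat => l1 (aug_state f pib x t))))
             (sup (range (fun t : nat => l2 (aug_state f pib x t))))))
  = sup (range (fun u : nat -> U =>
     Num.min (sup (range (fun t : nat => l1 (traj_u f u x t))))
             (sup (range (fun t : nat => l2 (traj_u f u x t))))))
  /\
  sup (range (fun u : nat -> U =>
     Num.min (sup (range (fun t : nat => l1 (traj_u f u x t))))
             (sup (range (fun t : nat => l2 (traj_u f u x t))))))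
  = VRtilde f l1 l2 x.
Proof.
case/card_gt0P: HU => u0 _.
split; apply/le_anti/andP; split.
- exact: (@A_le_B R X U f l1 l2 x u0).
- exact: (@B_le_A R X U f l1 l2 x u0).
- exact: (@B_le_C R X U f l1 l2 x u0).
- exact: (@C_le_B R X U f l1 l2 x u0).
Qed.
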